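(* Let $\pi$ be a partition in $\mathbb{C}(3,3)$ having at least one odd part. Then there exists a unique integer $m\ge0$ such that $\pi\in\mathbb{C}_{=}(3,3|m)$.
   Context: A partition $\pi=(\pi_1,\dots,\pi_\ell)$ is a finite non-increasing sequence of positive integers; ''$a$ occurs in $\pi$'' means $a=\pi_i$ for some $i$. Göllnitz–Gordon marking: $GG(\pi)$ assigns a positive integer (mark) to each part, processing the parts from smallest to largest; $\pi_i$ receives the smallest positive integer different from the marks of all parts $\pi_g$ with $g>i$ and $\pi_i-\pi_g\le 2$, where $\pi_i-\pi_g<2$ is required when $\pi_i$ is odd. An ''$r$-marked part $a$'' is a part equal to $a$ with mark $r$. $N_i(\pi)$ is the number of parts with mark $i$; $\pi^{(i)}_1\ge\dots\ge\pi^{(i)}_{N_i(\pi)}$ are the parts with mark $i$, with $\pi^{(i)}_0=+\infty$, $\pi^{(i)}_{N_i(\pi)+1}=-\infty$. $\mathbb{C}(k,r)$: partitions with (i) no odd part repeated; (ii) $\pi_i\ge\pi_{i+k-1}+2$ for $1\le i\le\ell-k+1$, strict if $\pi_i$ even; (iii) at most $r-1$ parts $\le 2$. Starting types: for $\pi\in\mathbb{C}(k,r)$ with $N_2=N_2(\pi)\ge1$, let $l$ be the largest integer in $\{0,\dots,N_2\}$ such that no odd part of $\pi$ is $\ge\pi^{(2)}_l$; for $l<i\le N_2$, $\pi^{(2)}_i$ has type $s_{-1}$. For $b=1,\dots,l$ in increasing order, type and auxiliary $\sigma_b$: for $b=1$: Case 1: 1-marked part $\pi^{(2)}_1-1$ exists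 and $\pi^{(2)}_1+2$ does not occur: type $s_0$, $\sigma_1=\pi^{(2)}_1-1$; Case 2: 1-marked $\pi^{(2)}_1-2$ exists and $\pi^{(2)}_1+2$ does not occur: type $s_1$, $\sigma_1=\pi^{(2)}_1-2$; Case 3: 1-marked $\pi^{(2)}_1+2$ exists: type $s_2$, $\sigma_1=\pi^{(2)}_1+2$; Case 4: 1-marked $\pi^{(2)}_1$ exists: type $s_3$, $\sigma_1=\pi^{(2)}_1$. For $2\le b\le l$: Case 1: 1-marked $\pi^{(2)}_b-1$ exists and, if a 1-marked $\pi^{(2)}_b+2$ exists, $\sigma_{b-1}=\pi^{(2)}_b+2$: type $s_0$, $\sigma_b=\pi^{(2)}_b-1$; Case 2: same with $\pi^{(2)}_b-2$: type $s_1$, $\sigma_b=\pi^{(2)}_b-2$; Case 3: 1-marked $\pi^{(2)}_b+2$ exists and $\sigma_{b-1}\ne\pi^{(2)}_b+2$: type $s_2$, $\sigma_b=\pi^{(2)}_b+2$; Case 4: 1-marked $\pi^{(2)}_b$ exists: type $s_3$, $\sigma_b=\pi^{(2)}_b$. $\mathbb{C}_{=}(k,r|p,t)$ (for $p,t\ge0$): the set of $\pi\in\mathbb{C}(k,r)$ such that (1) the largest odd part of $\pi$ is $2t+1$; (2) the mark of $2t+1$ in $GG(\pi)$ is at most $2$; (3) $\pi^{(2)}_p\ge 2t+2$ and $\pi^{(2)}_{p+1}\le 2t+2$; (4) if there is a 2-marked part $2t+2$ of starting type $s_0$, then $\pi^{(2)}_{p+1}=2t+2$ and there exists $1\le i\le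 p+1$ with $\pi^{(2)}_i=\pi^{(2)}_{p+1}+4(p-i+1)$ and $\pi^{(2)}_i$ occurring exactly once in $\pi$; (5) if there is a 2-marked part $2t+2$ of starting type $s_2$, then $\pi^{(2)}_p=2t+2$; (6) if $2t+2$ occurs in $\pi$ and there is no 2-marked part $2t+2$, then $\pi^{(2)}_p=2t+4$, it is of starting type $s_3$, and there exists $1\le i\le p$ with $\pi^{(2)}_i=\pi^{(2)}_p+4(p-i)$ such that $\pi^{(2)}_i+2$ does not occur in $\pi$. For $m\ge 0$, $\mathbb{C}_{=}(k,r|m)=\bigcup_{p,t\ge0,\ p+t=m}\mathbb{C}_{=}(k,r|p,t)$. *)

(* Defs.v *)
(* Partitions are non-increasing sequences of
   positive naturals: s = [:: pi_1; ...; pi_l], stored 0-based. *)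
From mathcomp Require Import all_boot.

Set Implicit Arguments.
Unset Strict Implicit.
Unset Printing Implicit Defensive.

Definition is_partition (s : seq nat) : bool :=
  sorted geq s && all (fun x => 0 < x) s.

Definition mex1 (ms : seq nat) : nat :=
  head 0 [seq k <- iota 1 (size ms).+1 | k \notin ms].

(* a is the part being marked, b an already marked (smaller or equal) part:
   b conflicts with a iff a - b <= 2, with a - b < 2 required when a is odd *)
Definition gg_conflict (a b : nat) : bool :=
  if odd a then a - b < 2 else a - b <= 2.

(* process parts from smallest to largest; prev = already marked (part, mark) *)
Fixpoint gg_aux (prev : seq (nat * nat)) (r : seq nat) : seq nat :=
  match r with
  | [::] => [::]
  | a :: r' =>
      let m := mex1 [seq q.2 | q <- prev & gg_conflict a q.1] in
      m :: gg_aux ((a, m) :: prev) r'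
  end.

(* GG s : the list of marks, aligned with s (i-th entry = mark of pi_(i+1)) *)
Definition GG (s : seq nat) : seq nat := rev (gg_aux [::] (rev s)).

(* parts with mark j, in non-increasing order: pi^(j)_1 >= pi^(j)_2 >= ... *)
Definition marked (s : seq nat) (j : nat) : seq nat :=
  [seq x.1 | x <- zip s (GG s) & x.2 == j].

Definition Nmark (s : seq nat) (j : nat) : nat := size (marked s j).

Inductive extn := NInf | Fin of nat | PInf.

Definition ext_le (x y : extn) : bool :=
  match x, y with
  | NInf, _ => true
  | _, PInf => true
  | Fin a, Fin b => a <= b
  | _, _ => false
  end.

(* pi^(j)_k, 1-based; pi^(j)_0 = +oo, pi^(j)_k = -oo for k > N_j *)
Definition pisup (s : seq nat) (j k : nat) : extn :=
  if k == 0 then PInf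
  else if k <= Nmark s j then Fin (nth 0 (marked s j) k.-1) else NInf.

Definition in_C (k r : nat) (s : seq nat) : Prop :=
  is_partition s /\
  (forall x, odd x -> count_mem x s <= 1) /\
  (forall i, i + k.-1 < size s ->
      nth 0 s (i + k.-1) + 2 <= nth 0 s i /\
      (~~ odd (nth 0 s i) -> nth 0 s (i + k.-1) + 2 < nth 0 s i)) /\
  count (fun x => x <= 2) s <= r.-1.

Inductive stype := s_m1 | s_0 | s_1 | s_2 | s_3.

Definition l_ok (s : seq nat) (l : nat) : bool :=
  all (fun x => odd x ==> ~~ ext_le (pisup s 2 l) (Fin x)) s.

Definition l_idx (s : seq nat) : nat :=
  \max_(l < (Nmark s 2).+1 | l_ok s l) (nat_of_ord l).

(* type and sigma_b of pi^(2)_b, given sigma_(b-1) (None if undefined) *)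
Definition stype_case (s : seq nat) (b : nat) (sig : option nat)
  : option (stype * nat) :=
  let v := nth 0 (marked s 2) b.-1 in
  let M1 := marked s 1 in
  if b == 1 then
    if (v - 1 \in M1) && (v + 2 \notin s) then Some (s_0, v - 1)
    else if (v - 2 \in M1) && (v + 2 \notin s) then Some (s_1, v - 2)
    else if v + 2 \in M1 then Some (s_2, v + 2)
    else if v \in M1 then Some (s_3, v)
    else None
  else
    if (v - 1 \in M1) && ((v + 2 \in M1) ==> (sig == Some (v + 2)))
      then Some (s_0, v - 1)
    else if (v - 2 \in M1) && ((v + 2 \in M1) ==> (sig == Some (v + 2)))
      then Some (s_1, v - 2)
    else if (v + 2 \in M1) && (sig != Some (v + 2)) then Some (s_2, v + 2)
    else if v \in M1 then Some (s_3, v)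
    else None.

Fixpoint stype_iter (s : seq nat) (b : nat) : option (stype * nat) :=
  match b with
  | 0 => None
  | b'.+1 => stype_case s b'.+1 (omap snd (stype_iter s b'))
  end.

Definition start_type (s : seq nat) (i : nat) : option stype :=
  if (1 <= i <= Nmark s 2) then
    (if i <= l_idx s then omap fst (stype_iter s i) else Some s_m1)
  else None.

Definition has_2marked_type (s : seq nat) (a : nat) (T : stype) : Prop :=
  exists i, 1 <= i <= Nmark s 2 /\ pisup s 2 i = Fin a /\ start_type s i = Some T.

Definition C_eq_pt (k r : nat) (s : seq nat) (p t : nat) : Prop :=
  in_C k r s /\
  ((2 * t + 1 \in s) /\ (forall x, x \in s -> odd x -> x <= 2 * t + 1)) /\
  (exists i, i < size s /\ nth 0 s i = 2 * t + 1 /\ nth 0 (GG s) i <= 2) /\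
  ext_le (Fin (2 * t + 2)) (pisup s 2 p) /\
  ext_le (pisup s 2 p.+1) (Fin (2 * t + 2)) /\
  (has_2marked_type s (2 * t + 2) s_0 ->
     pisup s 2 p.+1 = Fin (2 * t + 2) /\
     exists i, 1 <= i <= p.+1 /\
       pisup s 2 i = Fin (2 * t + 2 + 4 * (p.+1 - i)) /\
       count_mem (2 * t + 2 + 4 * (p.+1 - i)) s = 1) /\
  (has_2marked_type s (2 * t + 2) s_2 -> pisup s 2 p = Fin (2 * t + 2)) /\
  ((2 * t + 2 \in s) /\ (2 * t + 2 \notin marked s 2) ->
     pisup s 2 p = Fin (2 * t + 4) /\ start_type s p = Some s_3 /\
     exists i, 1 <= i <= p /\
       pisup s 2 i = Fin (2 * t + 4 + 4 * (p - i)) /\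
       (2 * t + 4 + 4 * (p - i)) + 2 \notin s).

Definition C_eq_m (k r : nat) (s : seq nat) (m : nat) : Prop :=
  exists p t, p + t = m /\ C_eq_pt k r s p t.

(* Main.v *)
Require Import Defs.
From mathcomp Require Import all_boot zify.

Lemma gg_aux_rcons prev r x :
  gg_aux prev (rcons r x) =
  rcons (gg_aux prev r)
    (mex1 [seq q.2 | q <- rev (zip r (gg_aux prev r)) ++ prev & gg_conflict x q.1]).
Proof.
elim: r prev => [|a r IH] prev //=.
rewrite IH /=; congr (_ :: rcons _ (mex1 _)).
by rewrite rev_cons -cats1 -catA.
Qed.

Lemma size_gg_aux prev r : size (gg_aux prev r) = size r.
Proof. by elim: r prev => [|a r IH] prev //=; rewrite IH. Qed.

Lemma size_GG s : size (GG s) = size s.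
Proof. by rewrite /GG size_rev size_gg_aux size_rev. Qed.

Lemma GG_cons x s : GG (x :: s) =
  mex1 [seq q.2 | q <- zip s (GG s) & gg_conflict x q.1] :: GG s.
Proof.
rewrite /GG rev_cons gg_aux_rcons rev_rcons cats0.
by rewrite rev_zip ?revK // size_gg_aux size_rev.
Qed.

Lemma GG_cat A R : exists X, GG (A ++ R) = X ++ GG R /\ size X = size A.
Proof.
elim: A => [|a A [X [HX HS]]]; first by exists [::].
rewrite cat_cons GG_cons HX; eexists; split; first by rewrite -cat_cons; reflexivity.
by rewrite /= HS.
Qed.

Lemma marked_cons x s j : marked (x :: s) j =
  if mex1 [seq q.2 | q <- zip s (GG s) & gg_conflict x q.1] == j
  then x :: marked s j else marked s j.
Proof. by rewrite /marked GG_cons /=; case: ifP. Qed.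

Lemma marked_cat A R j : exists P, marked (A ++ R) j = P ++ marked R j /\ {subset P <= A}.
Proof.
elim: A => [|a A [P [HP HS]]]; first by exists [::].
rewrite cat_cons marked_cons HP; case: ifP => _.
  exists (a :: P); split => // y; rewrite !inE => /orP [->//|/HS ->]; by rewrite orbT.
exists P; split => // y /HS; rewrite inE => ->; by rewrite orbT.
Qed.

Lemma marked_sub s j : {subset marked s j <= s}.
Proof.
have [P [HP HS]] := marked_cat s [::] j.
by move: HP; rewrite cats0 /marked /= cats0 => ->.
Qed.

Lemma mex1_le ms : mex1 ms <= (size ms).+1.
Proof.
rewrite /mex1; set l := filter _ _.
have : all (fun k => k <= (size ms).+1) l.
  apply/allP => k; rewrite mem_filter mem_iota => /andP [_ /andP [_ H]].
  by rewrite add1n ltnS in H.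
by case: l => //= k l /andP [].
Qed.

Lemma nth_cat_size (A R : seq nat) k : nth 0 (A ++ R) (size A + k) = nth 0 R k.
Proof. by rewrite nth_cat ltnNge leq_addr /= addnC addnK. Qed.

Lemma geq_transitive : transitive geq.
Proof. by move=> a b c H1 H2; apply: leq_trans H2 H1. Qed.

Lemma decomp s : in_C 3 3 s -> has odd s ->
  exists A B t, [/\ s = A ++ (2*t+1) :: B,
    (forall x, x \in A -> 2*t+2 <= x /\ ~~ odd x),
    (forall x, x \in B -> x <= 2*t) &
    (forall x, x \in behead B -> x < 2*t)].
Proof.
move=> [/andP [Hsort _] [Hodd [Hk _]]] Hhas.
set a := find odd s.
have Ha : a < size s by rewrite -has_find.
set o := nth 0 s a.
have Hoo : odd o by apply: nth_find.
set t := o./2.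
have Ho : o = 2*t+1.
  by rewrite -[LHS](odd_double_half o) Hoo -muln2 mulnC addnC.
have Hs : s = take a s ++ o :: drop a.+1 s.
  by rewrite -(drop_nth 0 Ha) cat_take_drop.
exists (take a s), (drop a.+1 s), t.
move: (Hsort); rewrite sorted_pairwise; last exact: geq_transitive.
rewrite {1}Hs pairwise_cat => /and3P [Hrel _ Hpw2].
move: Hpw2; rewrite pairwise_cons => /andP [HoB HpB].
have HAo : forall x, x \in take a s -> o <= x.
  by move=> x Hx; move/allrelP: Hrel => /(_ x o Hx); rewrite inE eqxx => /(_ isT).
have HAodd : forall x, x \in take a s -> ~~ odd x.
  move=> x /(nthP 0) [i Hi <-].
  rewrite size_take Ha in Hi.
  by rewrite nth_take // before_find.
have Hcnt := Hodd o Hoo.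
rewrite {1}Hs count_cat /= eqxx in Hcnt.
split.
- by rewrite -Ho.
- move=> x Hx; split; last exact: HAodd.
  have := HAo x Hx; have := HAodd x Hx.
  move=> Hev Hox.
  have : o != x by apply: contraNneq Hev => <-.
  by lia.
- move=> x Hx.
  have Hxo : x <= o by move/allP: HoB => /(_ x Hx).
  have Hne : x != o.
    apply/eqP => Exo; subst x.
    have : 0 < count_mem o (drop a.+1 s).
      by rewrite lt0n; apply/negP => /eqP /count_memPn; rewrite Hx.
    move=> H; have := leq_trans (leq_addl _ _) Hcnt; rewrite /= add1n ltnS leqn0 => /eqP E; by rewrite E in H.
  by lia.
- move: Hk => /(_ (size (take a s))) /=.
  have Hn : forall k, nth 0 s (size (take a s) + k) = nth 0 (o :: drop a.+1 s) k.
    by move=> k; rewrite {1}Hs nth_cat_size.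
  rewrite !Hn -[size (take a s)]addn0 Hn addn0 /=.
  case E: (drop a.+1 s) => [|b1 [|b2 B']] //= in HpB *.
  move=> Hk x Hx.
  have : b2 + 2 <= o.
    apply: (proj1 (Hk _)).
    by rewrite [in X in _ < X]Hs size_cat /= E /=; lia.
  move: HpB => /and3P [_ Hb2 _].
  move: Hx; rewrite inE => /orP [/eqP -> |Hx]; first by lia.
  by move/allP: Hb2 => /(_ x Hx) /= H1 H2; lia.
Qed.
Set Implicit Arguments.
Unset Strict Implicit.

Definition pis (L : seq nat) (k : nat) : extn :=
  if k == 0 then PInf else if k <= size L then Fin (nth 0 L k.-1) else NInf.

Lemma pisupE s j k : pisup s j k = pis (marked s j) k.
Proof. by []. Qed.

Lemma pis_le P Q k : k <= size P ->
  pis (P ++ Q) k = PInf \/ exists2 y, y \in P & pis (P ++ Q) k = Fin y.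
Proof.
rewrite /pis; case: k => [|k] //= Hk; first by left.
right; rewrite size_cat (leq_trans Hk (leq_addr _ _)) nth_cat Hk.
by exists (nth 0 P k) => //; apply: mem_nth.
Qed.

Lemma pis_gt P Q k : size P < k ->
  pis (P ++ Q) k = NInf \/ exists2 y, y \in Q & pis (P ++ Q) k = Fin y.
Proof.
rewrite /pis; case: k => [|k] //= Hk.
rewrite size_cat; case: ifP => H; last by left.
right; rewrite nth_cat ltnNge -ltnS Hk /=.
exists (nth 0 Q (k - size P)) => //; apply: mem_nth. change (k - size P < @size nat Q); lia.
Qed.

Lemma pis_at P x Q : pis (P ++ x :: Q) (size P).+1 = Fin x.
Proof.
rewrite /pis /= size_cat /= addnS ltnS leq_addr.
by rewrite -[size P]addn0 nth_cat_size.
Qed.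

Lemma pis_mem L k y : pis L k = Fin y -> y \in L.
Proof.
rewrite /pis; case: k => [|k] //=; case: ifP => // H [<-]; exact: mem_nth.
Qed.

Lemma pis3_uniq P Q c p : (forall x, x \in P -> c < x) -> (forall x, x \in Q -> x < c) ->
  ext_le (Fin c) (pis (P ++ Q) p) -> ext_le (pis (P ++ Q) p.+1) (Fin c) -> p = size P.
Proof.
move=> HP HQ H1 H2.
case: (ltngtP p (size P)) => // Hp.
- have := pis_le Q Hp; move=> [E|[y Hy E]]; rewrite E /= in H2 => //.
  by have := HP y Hy; lia.
- have := pis_gt Q Hp; move=> [E|[y Hy E]]; rewrite E /= in H1 => //.
  by have := HQ y Hy; lia.
Qed.

Lemma pis3_ex P Q c : (forall x, x \in P -> c < x) -> (forall x, x \in Q -> x < c) ->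
  ext_le (Fin c) (pis (P ++ Q) (size P)) /\ ext_le (pis (P ++ Q) (size P).+1) (Fin c).
Proof.
move=> HP HQ; split.
- have := pis_le Q (leqnn (size P)); move=> [->|[y Hy ->]] //=.
  by have := HP y Hy; lia.
- have := pis_gt Q (ltnSn (size P)); move=> [->|[y Hy ->]] //=.
  by have := HQ y Hy; lia.
Qed.

Lemma pis_eq_c P Q c k : (forall x, x \in P -> c < x) -> (forall x, x \in Q -> x < c) ->
  pis (P ++ c :: Q) k = Fin c -> k = (size P).+1.
Proof.
move=> HP HQ E.
case: (ltnP (size P) k) => Hk; last first.
  have := pis_le (c :: Q) Hk; rewrite E; move=> [//|[y Hy [Ey]]].
  by have := HP y Hy; lia.
case: (ltnP (size P).+1 k) => Hk2; last by apply/eqP; rewrite eqn_leq Hk2 Hk.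
have : size (P ++ [:: c]) < k by rewrite size_cat /= addn1.
move=> /(pis_gt Q); rewrite -catA /= E; move=> [//|[y Hy [Ey]]].
by have := HQ y Hy; lia.
Qed.

Lemma pis3_range P Q c p : (forall x, x \in P -> c < x) -> (forall x, x \in Q -> x < c) ->
  ext_le (Fin c) (pis (P ++ c :: Q) p) -> ext_le (pis (P ++ c :: Q) p.+1) (Fin c) ->
  p = size P \/ p = (size P).+1.
Proof.
move=> HP HQ H1 H2.
case: (ltnP p (size P)) => Hp.
  have := pis_le (c :: Q) Hp; move=> [E|[y Hy E]]; rewrite E /= in H2 => //.
  by have := HP y Hy; lia.
case: (ltnP (size P).+1 p) => Hp2.
  have : size (P ++ [:: c]) < p by rewrite size_cat /= addn1.
  move=> /(pis_gt Q); rewrite -catA /=; move=> [E|[y Hy E]]; rewrite E /= in H1 => //.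
  by have := HQ y Hy; lia.
lia.
Qed.

Lemma pis3_ex2 P Q c : (forall x, x \in P -> c < x) -> (forall x, x \in Q -> x < c) ->
  ext_le (Fin c) (pis (P ++ c :: Q) (size P).+1) /\
  ext_le (pis (P ++ c :: Q) (size P).+2) (Fin c) /\
  ext_le (Fin c) (pis (P ++ c :: Q) (size P)) /\
  ext_le (pis (P ++ c :: Q) (size P).+1) (Fin c).
Proof.
move=> HP HQ; rewrite pis_at /=; split => //; split; last split => //.
- have : size (P ++ [:: c]) < (size P).+2 by rewrite size_cat /= addn1.
  move=> /(pis_gt Q); rewrite -catA /=; move=> [->|[y Hy ->]] //=.
  by have := HQ y Hy; lia.
- have := pis_le (c :: Q) (leqnn (size P)); move=> [->|[y Hy ->]] //=.
  by have := HP y Hy; lia.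
Qed.
Set Implicit Arguments.
Unset Strict Implicit.

Lemma odd2t1 t : odd (2*t+1). Proof. by rewrite oddD oddM. Qed.
Lemma odd2t2 t : odd (2*t+2) = false. Proof. by rewrite oddD oddM. Qed.
Lemma odd2t4 t : odd (2*t+4) = false. Proof. by rewrite oddD oddM. Qed.

Lemma filter_noconf x (B G : seq nat) : (forall b, b \in B -> ~~ gg_conflict x b) ->
  [seq q.2 | q <- zip B G & gg_conflict x q.1] = [::].
Proof.
elim: B G => [|b B IH] [|g G] //= H.
rewrite (negbTE (H b (mem_head _ _))) IH // => y Hy; apply: H; by rewrite inE Hy orbT.
Qed.

Lemma filter_noconf' x (B G : seq nat) : (forall b, b \in B -> ~~ gg_conflict x b) ->
  [seq q <- zip B G | gg_conflict x q.1] = [::].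
Proof.
elim: B G => [|b B IH] [|g G] //= H.
rewrite (negbTE (H b (mem_head _ _))) IH // => y Hy; apply: H; by rewrite inE Hy orbT.
Qed.

Lemma mark_o_le t B : (forall x, x \in B -> x <= 2*t) -> (forall x, x \in behead B -> x < 2*t) ->
  mex1 [seq q.2 | q <- zip B (GG B) & gg_conflict (2*t+1) q.1] <= 2.
Proof.
case: B => [|b B] HB HB'; first by [].
have E : [seq q <- zip B (GG B) | gg_conflict (2*t+1) q.1] = [::].
  apply: filter_noconf' => y Hy; rewrite /gg_conflict odd2t1; have := HB' y Hy; lia.
rewrite GG_cons /= E.
by case: ifP => _; apply: leq_trans (mex1_le _) _.
Qed.

Lemma mark_o_1 t B : (forall x, x \in B -> x < 2*t) ->
  mex1 [seq q.2 | q <- zip B (GG B) & gg_conflict (2*t+1) q.1] = 1.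
Proof.
move=> HB; rewrite filter_noconf //.
move=> y Hy; rewrite /gg_conflict odd2t1; have := HB y Hy; lia.
Qed.

Lemma GG_vo t B : (forall x, x \in B -> x < 2*t) ->
  GG ((2*t+2) :: (2*t+1) :: B) = 2 :: 1 :: GG B.
Proof.
move=> HB; rewrite GG_cons [GG (_ :: B)]GG_cons mark_o_1 //=.
rewrite {1}/gg_conflict odd2t2.
have -> : 2 * t + 2 - (2 * t + 1) <= 2 by lia.
rewrite filter_noconf' //.
move=> y Hy; rewrite /gg_conflict odd2t2; have := HB y Hy; lia.
Qed.

Lemma t_uniq (s : seq nat) t t' : 2*t+1 \in s -> (forall x, x \in s -> odd x -> x <= 2*t+1) ->
  (2 * t' + 1 \in s) /\ (forall x, x \in s -> odd x -> x <= 2 * t' + 1) -> t' = t.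
Proof.
move=> H1 H2 [H3 H4].
have := H2 _ H3 (odd2t1 t'); have := H4 _ H1 (odd2t1 t); lia.
Qed.

Lemma case2 (s A B : seq nat) t : s = A ++ (2*t+1) :: B -> (forall x, x \in A -> 2*t+3 <= x) ->
  (forall x, x \in B -> x <= 2*t) -> (forall x, x \in behead B -> x < 2*t) ->
  (forall x, x \in s -> odd x -> x <= 2*t+1) -> in_C 3 3 s ->
  exists! m, C_eq_m 3 3 s m.
Proof.
move=> Hs HA HB HB' Hodd HC.
have [P [HP HPA]] := marked_cat A ((2*t+1)::B) 2.
rewrite -Hs in HP.
set Q := marked (2*t+1 :: B) 2 in HP.
have HPc : forall x, x \in P -> 2*t+2 < x by move=> x /HPA /HA; lia.
have HQc : forall x, x \in Q -> x < 2*t+2.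
  move=> x /marked_sub; rewrite inE => /orP [/eqP ->|/HB]; lia.
have Ho : 2*t+1 \in s by rewrite Hs mem_cat inE eqxx orbT.
have Hnot : 2*t+2 \notin s.
  by rewrite Hs mem_cat inE; apply/negP => /orP [/HA|/orP [/eqP|/HB]]; lia.
have Hno2 : forall T, ~ has_2marked_type s (2*t+2) T.
  move=> T [i [_ [Hi _]]]; rewrite pisupE in Hi.
  by move/pis_mem/marked_sub: Hi; rewrite (negbTE Hnot).
have Hgood : C_eq_pt 3 3 s (size P) t.
  have [H3a H3b] := pis3_ex HPc HQc.
  refine (conj HC (conj (conj Ho Hodd) (conj _ (conj _ (conj _ (conj _ (conj _ _))))))).
  - exists (size A); split; first by rewrite Hs size_cat /=; lia.
    split; first by rewrite Hs -[size A]addn0 nth_cat_size.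
    have [X [HX HS]] := GG_cat A (2*t+1 :: B).
    rewrite Hs HX -HS -[size X]addn0 nth_cat_size GG_cons /=.
    exact: mark_o_le.
  - by rewrite pisupE HP.
  - by rewrite pisupE HP.
  - by move/Hno2.
  - by move/Hno2.
  - by move=> [H _]; move: Hnot; rewrite H.
exists (size P + t); split; first by exists (size P), t.
move=> m [p [t' [Hm [_ [H1 [_ [H3 [H4 _]]]]]]]].
have Et := t_uniq Ho Hodd H1; subst t'.
rewrite !pisupE HP in H3 H4.
by rewrite -Hm (pis3_uniq HPc HQc H3 H4).
Qed.
Set Implicit Arguments.
Unset Strict Implicit.

Lemma marked_vo t (B : seq nat) : (forall x, x \in B -> x < 2*t) ->
  marked ((2*t+2) :: (2*t+1) :: B) 2 = (2*t+2) :: marked B 2 /\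
  marked ((2*t+2) :: (2*t+1) :: B) 1 = (2*t+1) :: marked B 1.
Proof. by move=> HB; rewrite /marked GG_vo. Qed.

Lemma marked_w t (B : seq nat) : (forall x, x \in B -> x < 2*t) ->
  (2*t+4) \in marked ((2*t+4) :: (2*t+2) :: (2*t+1) :: B) 1.
Proof.
move=> HB; rewrite marked_cons GG_vo //=.
rewrite {1}/gg_conflict odd2t4.
have -> : 2 * t + 4 - (2 * t + 2) <= 2 by lia.
rewrite {1}/gg_conflict odd2t4.
have -> : 2 * t + 4 - (2 * t + 1) <= 2 = false by lia.
rewrite filter_noconf' /=; first by rewrite mem_head.
move=> y Hy; rewrite /gg_conflict odd2t4; have := HB y Hy; lia.
Qed.

Lemma type_lemma (s : seq nat) t k sig :
  nth 0 (marked s 2) k = 2*t+2 ->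
  2*t+1 \in marked s 1 -> 2*t \notin marked s 1 -> 2*t+2 \notin marked s 1 ->
  (2*t+2+2 \in s -> 2*t+2+2 \in marked s 1) ->
  omap fst (stype_case s k.+1 sig) = Some s_0 \/ omap fst (stype_case s k.+1 sig) = Some s_2.
Proof.
move=> Hv H1 H2 H3 H4.
rewrite /stype_case /= Hv.
have -> : 2*t+2-1 = 2*t+1 by lia.
have -> : 2*t+2-2 = 2*t by lia.
rewrite H1 (negbTE H2) (negbTE H3) /=.
case: (k.+1 == 1) => /=.
  case E: (2*t+2+2 \in s) => /=; first by rewrite (H4 E); right.
  by left.
case E: (2*t+2+2 \in marked s 1) => /=; first by case: (sig == _) => /=; [left|right].
by left.
Qed.

Lemma case1 (s A B : seq nat) t : s = A ++ (2*t+2) :: (2*t+1) :: B ->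
  (forall x, x \in A -> 2*t+4 <= x) -> (forall x, x \in B -> x < 2*t) ->
  (2*t+4 \in A -> exists A2, A = rcons A2 (2*t+4)) ->
  (forall x, x \in s -> odd x -> x <= 2*t+1) -> in_C 3 3 s ->
  exists! m, C_eq_m 3 3 s m.
Proof.
move=> Hs HA HB HA4 Hodd HC.
have [HM2 HM1] := marked_vo HB.
have [P [HP HPA]] := marked_cat A ((2*t+2) :: (2*t+1) :: B) 2.
have [P1 [HP1 HP1A]] := marked_cat A ((2*t+2) :: (2*t+1) :: B) 1.
rewrite -Hs HM2 in HP; rewrite -Hs HM1 in HP1.
set Q := marked B 2 in HP.
have HPc : forall x, x \in P -> 2*t+2 < x by move=> x /HPA /HA; lia.
have HQc : forall x, x \in Q -> x < 2*t+2 by move=> x /marked_sub /HB; lia.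
have Ho : 2*t+1 \in s by rewrite Hs mem_cat !inE eqxx !orbT.
have Hcnt : count_mem (2*t+2) s = 1.
  rewrite Hs count_cat /= eqxx.
  have -> : (2*t+1 == 2*t+2) = false by apply/eqP; lia.
  have -> : count_mem (2*t+2) A = 0.
    by apply/count_memPn/negP => /HA; lia.
  have -> : count_mem (2*t+2) B = 0.
    by apply/count_memPn/negP => /HB; lia.
  by rewrite addn0.
have Hv2 : 2*t+2 \in marked s 2 by rewrite HP mem_cat mem_head orbT.
have Hst : start_type s (size P).+1 = Some s_0 \/ start_type s (size P).+1 = Some s_2.
  have HN : Nmark s 2 = size (P ++ (2*t+2) :: Q) by rewrite /Nmark HP.
  have Hlt : (size P).+1 < (Nmark s 2).+1 by rewrite HN size_cat /= addnS !ltnS leq_addr.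
  have Hok : l_ok s (size P).+1.
    rewrite /l_ok pisupE HP pis_at /=; apply/allP => x Hx; apply/implyP => Hox.
    by rewrite -ltnNge; have := Hodd x Hx Hox; lia.
  have Hl : (size P).+1 <= l_idx s.
    exact: (@leq_bigmax_cond _ (fun l : 'I_(Nmark s 2).+1 => l_ok s l)
              (fun l => nat_of_ord l) (Ordinal Hlt) Hok).
  rewrite /start_type Hl.
  have -> : (1 <= (size P).+1 <= Nmark s 2) by move: Hlt; rewrite ltnS => ->.
  change (stype_iter s (size P).+1) with
    (stype_case s (size P).+1 (omap snd (stype_iter s (size P)))).
  apply: type_lemma.
  - by rewrite HP -[size P]addn0 nth_cat_size.
  - by rewrite HP1 mem_cat mem_head orbT.
  - by apply/negP => /marked_sub; rewrite Hs mem_cat !inE;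
      move=> /orP [/HA|/orP [/eqP|/orP [/eqP|/HB]]]; lia.
  - rewrite HP1 mem_cat inE; apply/negP => /orP [/HP1A/HA|/orP [/eqP|/marked_sub/HB]]; lia.
  - move=> Hw.
    have HwA : 2*t+4 \in A.
      have E : 2*t+2+2 = 2*t+4 by lia.
      rewrite E in Hw.
      move: Hw; rewrite Hs mem_cat !inE => /orP [//|/orP [/eqP ?|/orP [/eqP ?|/HB ?]]]; lia.
    have [A2 EA] := HA4 HwA.
    have [P2 [HP2 _]] := marked_cat A2 ((2*t+4) :: (2*t+2) :: (2*t+1) :: B) 1.
    have -> : 2*t+2+2 = 2*t+4 by lia.
    rewrite Hs EA cat_rcons HP2 mem_cat marked_w ?orbT //.
have [H3a [H3b [H3c H3d]]] := pis3_ex2 HPc HQc.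
have Hnth : nth 0 s (size A).+1 = 2*t+1.
  by rewrite Hs -[(size A).+1]addn1 nth_cat_size.
have HGG : nth 0 (GG s) (size A).+1 = 1.
  have [X [HX HS]] := GG_cat A ((2*t+2) :: (2*t+1) :: B).
  by rewrite Hs HX GG_vo // -[(size A).+1]addn1 -HS nth_cat_size.
have Hsz : (size A).+1 < size s by rewrite Hs size_cat /=; lia.
have H2 : exists i, i < size s /\ nth 0 s i = 2 * t + 1 /\ nth 0 (GG s) i <= 2.
  by exists (size A).+1; rewrite Hnth HGG.
have H6 : (2 * t + 2 \in s) /\ (2 * t + 2 \notin marked s 2) -> False.
  by move=> [_ /negP].
case: Hst => Hty.
- have Hgood : C_eq_pt 3 3 s (size P) t.
    refine (conj HC (conj (conj Ho Hodd) (conj H2 (conj _ (conj _ (conj _ (conj _ _))))))).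
    + by rewrite pisupE HP.
    + by rewrite pisupE HP.
    + move=> _; split; first by rewrite pisupE HP pis_at.
      exists (size P).+1; split; first by rewrite leqnn.
      by rewrite subnn muln0 addn0 pisupE HP pis_at.
    + move=> [i [_ [Hi Hi2]]]; rewrite pisupE HP in Hi.
      by move: Hi2; rewrite (pis_eq_c HPc HQc Hi) Hty.
    + by move/H6.
  exists (size P + t); split; first by exists (size P), t.
  move=> m [p [t' [Hm [_ [H1 [_ [_ [_ [H4 _]]]]]]]]].
  have Et := t_uniq Ho Hodd H1; subst t'.
  have Hh : has_2marked_type s (2*t+2) s_0.
    exists (size P).+1; split; first by rewrite ltnS leq0n /Nmark HP size_cat /= addnS ltnS leq_addr.
    by rewrite pisupE HP pis_at.
  have [H4a _] := H4 Hh.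
  rewrite pisupE HP in H4a.
  by have [Ep] := pis_eq_c HPc HQc H4a; rewrite -Hm Ep.
- have Hgood : C_eq_pt 3 3 s (size P).+1 t.
    refine (conj HC (conj (conj Ho Hodd) (conj H2 (conj _ (conj _ (conj _ (conj _ _))))))).
    + by rewrite pisupE HP.
    + by rewrite pisupE HP.
    + move=> [i [_ [Hi Hi2]]]; rewrite pisupE HP in Hi.
      by move: Hi2; rewrite (pis_eq_c HPc HQc Hi) Hty.
    + by move=> _; rewrite pisupE HP pis_at.
    + by move/H6.
  exists ((size P).+1 + t); split; first by exists (size P).+1, t.
  move=> m [p [t' [Hm [_ [H1 [_ [_ [_ [_ [H5 _]]]]]]]]]].
  have Et := t_uniq Ho Hodd H1; subst t'.
  have H5a : pisup s 2 p = Fin (2 * t + 2).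
    apply: H5; exists (size P).+1; split; first by rewrite ltnS leq0n /Nmark HP size_cat /= addnS ltnS leq_addr.
    by rewrite pisupE HP pis_at.
  rewrite pisupE HP in H5a.
  by rewrite -Hm (pis_eq_c HPc HQc H5a).
Qed.
Set Implicit Arguments.
Unset Strict Implicit.

Lemma sorted_cat_ge (s L R : seq nat) x : sorted geq s -> s = L ++ x :: R ->
  forall y, y \in L -> x <= y.
Proof.
move=> Hs E y Hy; move: Hs; rewrite sorted_pairwise; last exact: geq_transitive.
rewrite E pairwise_cat => /and3P [Hr _ _].
by move/allrelP: Hr => /(_ y x Hy); rewrite mem_head => /(_ isT).
Qed.

Lemma inC_at s (L R : seq nat) x y z : in_C 3 3 s -> s = L ++ x :: y :: z :: R ->
  z + 2 <= x /\ (~~ odd x -> z + 2 < x).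
Proof.
move=> [_ [_ [Hk _]]] E.
have := Hk (size L); rewrite /= E !nth_cat_size /=.
have -> : nth 0 (L ++ [:: x, y, z & R]) (size L) = x.
  by rewrite -[size L]addn0 nth_cat_size.
apply; rewrite size_cat /=; lia.
Qed.

Theorem theorem5p5 (s : seq nat) :
  in_C 3 3 s -> has odd s -> exists! m : nat, C_eq_m 3 3 s m.
Proof.
move=> HC Hh.
have Hsort : sorted geq s by case: HC => /andP [].
have [A [B [t [Hs HA HB HB']]]] := decomp s HC Hh.
have Hodd : forall x, x \in s -> odd x -> x <= 2*t+1.
  move=> x; rewrite Hs mem_cat inE => /orP [/HA [_ /negbTE ->]//|/orP [/eqP ->//|/HB]].
  by move=> H _; lia.
case: (lastP A) HA Hs => [|A1 y] HA Hs.
  by apply: (case2 (A := [::]) (B := B) _ _ HB HB' Hodd HC); [rewrite Hs|].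
have Hy : 2*t+2 <= y by case: (HA y); rewrite ?mem_rcons ?mem_head.
have HA1y : forall x, x \in A1 -> y <= x.
  by apply: (sorted_cat_ge Hsort); rewrite Hs cat_rcons.
case: (eqVneq y (2*t+2)) => Ey.
- subst y.
  have Hs' : s = A1 ++ (2*t+2) :: (2*t+1) :: B by rewrite Hs cat_rcons.
  have HBlt : forall x, x \in B -> x < 2*t.
    case EB: B HB' Hs' => [|b1 B'] //= HB1 Hs' x.
    rewrite inE => /orP [/eqP ->|/HB1 //].
    have [_ H] := inC_at HC Hs'.
    by have := H (negbT (odd2t2 t)); lia.
  have HA4 : forall x, x \in A1 -> 2*t+4 <= x.
    case: (lastP A1) HA1y Hs' HA => [|A2 w] // HA1y Hs' HA.
    have Hw : 2*t+4 <= w.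
      have [_ H] := inC_at HC (etrans Hs' (cat_rcons _ _ _)).
      have Hwm : w \in rcons (rcons A2 w) (2*t+2) by rewrite mem_rcons inE mem_rcons mem_head orbT.
      have [_ Hev] := HA w Hwm.
      by have := H Hev; lia.
    move=> x; rewrite mem_rcons inE => /orP [/eqP -> //|Hx].
    have Hsw : s = A2 ++ w :: [:: 2*t+2, 2*t+1 & B] by rewrite Hs' cat_rcons.
    have := sorted_cat_ge Hsort Hsw Hx.
    lia.
  apply: (case1 Hs' HA4 HBlt _ Hodd HC).
  case: (lastP A1) HA4 Hs' => [|A2 w] // HA4 Hs' Hin.
  exists A2; congr rcons.
  have Hwm : w \in rcons A2 w by rewrite mem_rcons mem_head.
  have Hw := HA4 w Hwm.
  move: Hin; rewrite mem_rcons inE => /orP [/eqP -> //|Hin].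
  have Hsw : s = A2 ++ w :: [:: 2*t+2, 2*t+1 & B] by rewrite Hs' cat_rcons.
  have := sorted_cat_ge Hsort Hsw Hin.
  lia.
- apply: (case2 (A := rcons A1 y) (B := B) Hs _ HB HB' Hodd HC).
  move=> x; rewrite mem_rcons inE => /orP [/eqP ->|/HA1y]; first by move: Ey => /eqP; lia.
  by move: Ey => /eqP; lia.
Qed.
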